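(* Let $m\ge3$. For any $k_1,k_2>0$, as $\epsilon\to0$, \[\mu_m^H(\Pi(k_1\epsilon,k_2\epsilon))\to\frac{\frac{k_2}{k_1}\gamma^{\frac{m-2}{2}}}{1+\frac{k_2}{k_1}\gamma^{\frac{m-2}{2}}},\qquad \mu_1^L(\Pi(k_1\epsilon,k_2\epsilon))\to\frac{\frac{k_1}{k_2}\gamma^{\frac{m-2}{2}}}{1+\frac{k_1}{k_2}\gamma^{\frac{m-2}{2}}}.\]
   Context: The state of nature is $\theta\in\{H,L\}$. $S$ is a finite signal set; conditional on $\theta$, signals are i.i.d. with distribution $\pi_\theta$, $\pi_\theta(s)>0$ for all $s,\theta$, $\pi_H\ne\pi_L$. Let $\bar\ell=\max_s\pi_H(s)/\pi_L(s)$, $\underline\ell=\min_s\pi_H(s)/\pi_L(s)$, $\gamma=\bar\ell/\underline\ell>1$; fix a signal $h$ with $\pi_H(h)/\pi_L(h)=\bar\ell$ and a signal $l$ with $\pi_H(l)/\pi_L(l)=\underline\ell$. A protocol on $M=\{1,\dots,m\}$ is $\Pi=(f,g,a)$ with $f:M\times S\to\Delta(M)$, $g\in\Delta(M)$, $a:M\to[0,1]$. For small $\epsilon_1,\epsilon_2>0$ define $\Pi(\epsilon_1,\epsilon_2)$ by: $g(2)=1$; $a(m)=1$ and $a(i)=0$ for $i\ne m$; with $c_h=(\pi_H(h)\pi_L(h))^{(m-2)/2}$ and $c_l=(\pi_H(l)\pi_L(l))^{(m-2)/2}$: states $1$ and $m$ are absorbing ($f(i,s)(i)=1$ for $i\in\{1,m\}$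 and all $s$); on signal $l$: from state $2$ move to $1$ with probability $c_h\epsilon_1$ and stay at $2$ otherwise, and from each state $i\in\{3,\dots,m-1\}$ move to $i-1$; on signal $h$: from state $m-1$ move to $m$ with probability $c_l\epsilon_2$ and stay at $m-1$ otherwise, and from each state $i\in\{2,\dots,m-2\}$ move to $i+1$; on any other signal, every state stays where it is. For this (parsimonious) protocol, $\mu_1^\theta(\Pi),\mu_m^\theta(\Pi)$ denote the probabilities that the Markov chain started at $m_0=2$, with signals drawn i.i.d. from $\pi_\theta$, is absorbed in state $1$ and state $m$ respectively. *)

(* Defs.v *)
From HB Require Import structures.
From mathcomp Require Import all_boot all_order all_algebra.
From mathcomp Require Import all_classical all_reals all_analysis.
Set Implicit Arguments. Unset Strict Implicit. Unset Printing Implicit Defensive.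
Import Order.TTheory GRing.Theory Num.Theory numFieldNormedType.Exports.
Local Open Scope ring_scope.

Section ProtocolDefs.
Context {R : realType} {S : finType}.

Definition lr (piH piL : S -> R) (s : S) : R := piH s / piL s.

(* x^((m-2)/2) for x >= 0, written as (sqrt x)^(m-2) *)
Definition halfpow (m : nat) (x : R) : R := Num.sqrt x ^+ (m - 2).

(* Transition function f of Pi(e1,e2) on states 1..m (nat labels):
   f i s j = probability of moving from state i to state j on signal s. *)
Definition proto_f (m : nat) (piH piL : S -> R) (h l : S) (e1 e2 : R)
    (i : nat) (s : S) (j : nat) : R :=
  let ch := halfpow m (piH h * piL h) in
  let cl := halfpow m (piH l * piL l) in
  if (i <= 1)%N || (m <= i)%N then (j == i)%:R
  else if s == l then
    (if i == 2%N then (j == 1%N)%:R * (ch * e1) + (j == 2%N)%:R * (1 - ch * e1)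
     else (j == i.-1)%:R)
  else if s == h then
    (if i == m.-1 then (j == m)%:R * (cl * e2) + (j == m.-1)%:R * (1 - cl * e2)
     else (j == i.+1)%:R)
  else (j == i)%:R.

Definition trans (f : nat -> S -> nat -> R) (pi : S -> R) (i j : nat) : R :=
  \sum_(s : S) pi s * f i s j.

(* distribution of the state after n signals, started at m0 = 2 (g(2) = 1);
   states are 1..m, the sum ranges over labels 0..m (label 0 never charged) *)
Fixpoint state_dist (m : nat) (f : nat -> S -> nat -> R) (pi : S -> R) (n : nat)
    : nat -> R :=
  match n with
  | 0 => fun j => (j == 2%N)%:R
  | n'.+1 => fun j =>
      \sum_(i < m.+1) state_dist m f pi n' i * trans f pi i j
  end.

(* probability of absorption in the absorbing state t: since t is absorbing,
   the events {X_n = t} increase to {absorbed in t}, so this is the limit *)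
Definition absorb_prob (m : nat) (f : nat -> S -> nat -> R) (pi : S -> R)
    (t : nat) : R :=
  limn (fun n => state_dist m f pi n t).

End ProtocolDefs.

(* Main.v *)
Require Import Defs.
From HB Require Import structures.
From mathcomp Require Import all_boot all_order all_algebra.
From mathcomp Require Import all_classical all_reals all_analysis.
From mathcomp Require Import ring lra zify.
Import Order.TTheory GRing.Theory Num.Theory numFieldNormedType.Exports.
Local Open Scope ring_scope.
Local Open Scope classical_set_scope.

Section Chain.
Variables (R : realType) (S : finType) (piH piL : S -> R) (h l : S) (e1 e2 : R).
Variables (pi : S -> R) (m : nat).
Hypothesis hm : (3 <= m)%N.
Hypothesis hlh : h != l.

Let f := proto_f m piH piL h l e1 e2.
Definition ca := halfpow m (piH h * piL h) * e1.
Definition cb := halfpow m (piH l * piL l) * e2.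

Definition Ef (i : nat) (s : S) (psi : nat -> R) : R :=
  if (i <= 1)%N || (m <= i)%N then psi i
  else if s == l then (if i == 2%N then ca * psi 1%N + (1 - ca) * psi 2%N else psi i.-1)
  else if s == h then (if i == m.-1 then cb * psi m + (1 - cb) * psi m.-1 else psi i.+1)
  else psi i.

Definition Pf (psi : nat -> R) (i : nat) : R :=
  if (i <= 1)%N || (m <= i)%N then psi i
  else pi l * (if i == 2%N then ca * psi 1%N + (1 - ca) * psi 2%N else psi i.-1)
     + pi h * (if i == m.-1 then cb * psi m + (1 - cb) * psi m.-1 else psi i.+1)
     + (1 - pi l - pi h) * psi i.

Lemma sum_ind (psi : nat -> R) k : (k <= m)%N ->
  \sum_(j < m.+1) (nat_of_ord j == k)%:R * psi j = psi k.
Proof.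
move=> km.
rewrite (bigD1 (Ordinal (n:=m.+1) (m:=k) km)) //= eqxx mul1r big1 ?addr0 //.
move=> j hj; rewrite (_ : (nat_of_ord j == k) = false) ?mul0r //.
by apply: contraNF hj => /eqP e; apply/eqP/val_inj.
Qed.

Lemma sum_Ef i s (psi : nat -> R) : (i <= m)%N ->
  \sum_(j < m.+1) f i s j * psi j = Ef i s psi.
Proof.
move=> im; rewrite /f /proto_f /Ef.
case: ifP => [_|ab]; first exact: sum_ind.
move/negbT: ab; rewrite negb_or -!ltnNge => /andP[i1 im'].
case: ifP => _.
  case: ifP => _.
    under eq_bigr do rewrite mulrDl.
    rewrite big_split /=.
    under eq_bigr do rewrite mulrAC.
    rewrite -mulr_suml sum_ind; last by apply: leq_trans hm.
    under [X in _ + X]eq_bigr do rewrite mulrAC.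
    rewrite -mulr_suml sum_ind; last by apply: leq_trans hm.
    by rewrite /ca mulrC [_ * psi 2%N]mulrC.
  apply: sum_ind; by case: i i1 im {im'} => // i; rewrite ltnS /= => _ /ltnW.
case: ifP => _.
  case: ifP => _.
    under eq_bigr do rewrite mulrDl.
    rewrite big_split /=.
    under eq_bigr do rewrite mulrAC.
    rewrite -mulr_suml sum_ind //.
    under [X in _ + X]eq_bigr do rewrite mulrAC.
    rewrite -mulr_suml sum_ind; last by rewrite leq_pred.
    by rewrite /cb mulrC [_ * psi m.-1]mulrC.
  exact: sum_ind.
exact: sum_ind.
Qed.

Lemma sum_pi_split (F : S -> R) :
  \sum_(s : S) pi s * F s =
  pi l * F l + pi h * F h + \sum_(s | (s != l) && (s != h)) pi s * F s.
Proof.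
rewrite (bigD1 l) //= (bigD1 h) /=; last by rewrite hlh.
by rewrite addrA.

Qed.

Hypothesis pi1 : \sum_(s : S) pi s = 1.

Lemma sum_Pf i (psi : nat -> R) : (i <= m)%N ->
  \sum_(j < m.+1) trans f pi i j * psi j = Pf psi i.
Proof.
move=> im; rewrite /trans.
under eq_bigr do rewrite mulr_suml.
rewrite exchange_big /=.
under eq_bigr do (under eq_bigr do rewrite -mulrA; rewrite -mulr_sumr sum_Ef //).
have rest : \sum_(s | (s != l) && (s != h)) pi s = 1 - pi l - pi h.
  have := pi1; rewrite (bigD1 l) //= (bigD1 h) /=; last by rewrite hlh.
  by move=> <-; ring.
rewrite sum_pi_split /Pf /Ef.
case: ifP => _.
  rewrite -big_distrl /= rest /=; ring.
have hl : (h == l) = false by apply: negbTE.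
rewrite eqxx hl eqxx.
congr (_ + _ + _).
rewrite -rest big_distrl /=; apply: eq_bigr => s /andP[/negbTE -> /negbTE ->].
by [].
Qed.

Definition Vd n (psi : nat -> R) := \sum_(j < m.+1) state_dist m f pi n j * psi j.

Lemma V_step n (psi : nat -> R) : Vd n.+1 psi = Vd n (Pf psi).
Proof.
rewrite /Vd /=.
under eq_bigr do rewrite mulr_suml.
rewrite exchange_big /=; apply: eq_bigr => i _.
under eq_bigr do rewrite -mulrA.
by rewrite -mulr_sumr sum_Pf // -ltnS.
Qed.

Lemma V_ext n (psi chi : nat -> R) : (forall j, (j <= m)%N -> psi j = chi j) -> Vd n psi = Vd n chi.
Proof. by move=> e; apply: eq_bigr => j _; rewrite e // -ltnS. Qed.

Lemma V0 (psi : nat -> R) : Vd 0 psi = psi 2%N.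
Proof. by rewrite /Vd /= sum_ind //; apply: leq_trans hm. Qed.

Lemma dist_V n k : (k <= m)%N -> state_dist m f pi n k = Vd n (fun j : nat => (j == k)%:R).
Proof.
move=> km; rewrite /Vd.
under eq_bigr do rewrite mulrC.
by rewrite sum_ind.
Qed.

Lemma harmonic n (psi : nat -> R) : (forall i, (i <= m)%N -> Pf psi i = psi i) -> Vd n psi = psi 2%N.
Proof.
move=> H; elim: n => [|n IH]; first exact: V0.
by rewrite V_step -IH; apply: V_ext.
Qed.


Hypothesis pi0 : forall s, 0 <= pi s.
Hypothesis ca01 : 0 <= ca <= 1.
Hypothesis cb01 : 0 <= cb <= 1.

Lemma rest_eq : \sum_(s | (s != l) && (s != h)) pi s = 1 - pi l - pi h.
Proof.
have := pi1; rewrite (bigD1 l) //= (bigD1 h) /=; last by rewrite hlh.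
by move=> <-; ring.
Qed.

Lemma rest_ge0 : 0 <= 1 - pi l - pi h.
Proof. by rewrite -rest_eq; apply: sumr_ge0 => s _. Qed.

Lemma Pf_ge0 (psi : nat -> R) : (forall j, (j <= m)%N -> 0 <= psi j) ->
  forall i, (i <= m)%N -> 0 <= Pf psi i.
Proof.
move=> H i im; rewrite /Pf; case: ifP => [_|/negbT]; first exact: H.
rewrite negb_or -!ltnNge => /andP[i1 im'].
have r0 := rest_ge0.
case/andP: ca01 => a0 a1; case/andP: cb01 => b0 b1.
have a1' : 0 <= 1 - ca by rewrite subr_ge0.
have b1' : 0 <= 1 - cb by rewrite subr_ge0.
apply: addr_ge0; [apply: addr_ge0|]; apply: mulr_ge0 => //; last (apply: H; lia).
  case: ifP => _; last (apply: H; lia).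
  by apply: addr_ge0; apply: mulr_ge0 => //; apply: H; lia.
case: ifP => _; last (apply: H; lia).
by apply: addr_ge0; apply: mulr_ge0 => //; apply: H; lia.
Qed.

Lemma Pf_LB (psi : nat -> R) : (forall j, (j <= m)%N -> 0 <= psi j) ->
  forall i, (1 < i)%N -> (i < m)%N ->
  pi l * (if i == 2%N then ca * psi 1%N else psi i.-1) <= Pf psi i.
Proof.
move=> H i i1 im'.
have hb : ((i <= 1)%N || (m <= i)%N) = false.
  by apply/negbTE; rewrite negb_or -!ltnNge i1 im'.
rewrite /Pf hb.
have r0 := rest_ge0.
case/andP: ca01 => a0 a1; case/andP: cb01 => b0 b1.
have a1' : 0 <= 1 - ca by rewrite subr_ge0.
have b1' : 0 <= 1 - cb by rewrite subr_ge0.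
rewrite -addrA -[X in X <= _]addr0; apply: lerD.
  apply: ler_wpM2l => //; case: ifP => _ //.
  rewrite lerDl; apply: mulr_ge0 => //; apply: H; lia.
apply: addr_ge0; last (apply: mulr_ge0 => //; apply: H; lia).
apply: mulr_ge0 => //.
case: ifP => _; last (apply: H; lia).
by apply: addr_ge0; apply: mulr_ge0 => //; apply: H; lia.
Qed.

Lemma d_ge0 n j : (j <= m)%N -> 0 <= state_dist m f pi n j.
Proof.
elim: n j => [|n IH] j jm; first by rewrite /=; case: (j == 2%N).
rewrite dist_V // V_step /Vd; apply: sumr_ge0 => i _; apply: mulr_ge0.
  by apply: IH; rewrite -ltnS.
apply: Pf_ge0; last by rewrite -ltnS.
by move=> k _; case: (k == j).
Qed.

Lemma V_le n (psi chi : nat -> R) : (forall j, (j <= m)%N -> psi j <= chi j) ->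
  Vd n psi <= Vd n chi.
Proof.
move=> H; rewrite /Vd; apply: ler_sum => j _; apply: ler_wpM2l.
  by apply: d_ge0; rewrite -ltnS.
by apply: H; rewrite -ltnS.
Qed.

Lemma V_lin n (psi chi : nat -> R) c :
  Vd n (fun j => psi j + c * chi j) = Vd n psi + c * Vd n chi.
Proof.
rewrite /Vd mulr_sumr -big_split /=; apply: eq_bigr => j _; ring.
Qed.

Lemma V1 n : Vd n (fun=> 1) = 1.
Proof.
apply: harmonic => i _; rewrite /Pf; case: ifP => // _.
case: ifP => _; case: ifP => _; ring.
Qed.

Lemma d_le1 n j : (j <= m)%N -> state_dist m f pi n j <= 1.
Proof.
move=> jm; rewrite dist_V // -{2}(V1 n); apply: V_le => k _ /=.
by case: (k == j); rewrite ?lexx ?ler01.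
Qed.

Lemma step1 n : state_dist m f pi n 1%N + pi l * ca * state_dist m f pi n 2%N
  <= state_dist m f pi n.+1 1%N.
Proof.
have m2 : (2 <= m)%N by lia.
rewrite (dist_V n 1%N ltac:(lia)) (dist_V n 2%N ltac:(lia)) (dist_V n.+1 1%N ltac:(lia)).
rewrite -V_lin V_step; apply: V_le => j jm.
have H : forall k, (k <= m)%N -> 0 <= (k == 1%N)%:R :> R by move=> k _; case: (k == 1%N).
case: (boolP ((j <= 1)%N || (m <= j)%N)) => hj.
  rewrite /Pf hj (_ : (j == 2%N) = false) ?mulr0 ?addr0 //.
  by apply/negbTE/eqP => e; subst j; move: hj; rewrite /=; lia.
move: hj; rewrite negb_or -!ltnNge => /andP[j1 jm'].
apply: le_trans _ (Pf_LB (fun j0 : nat => (j0 == 1%N)%:R) H j j1 jm').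
rewrite (_ : (j == 1%N) = false); last by apply/negbTE/eqP => e; subst j.
rewrite add0r; case: ifP => /eqP e.
  by rewrite mulr1 eqxx mulr1.
rewrite mulr0.
by apply: mulr_ge0 => //; case: (j.-1 == 1%N).
Qed.

Lemma step2 n k : (2 <= k)%N -> (k.+1 < m)%N ->
  pi l * state_dist m f pi n k.+1 <= state_dist m f pi n.+1 k.
Proof.
move=> k2 km.
rewrite (dist_V n k.+1 ltac:(lia)) (dist_V n.+1 k ltac:(lia)).
rewrite V_step.
have -> : pi l * Vd n (fun j : nat => (j == k.+1)%:R) =
          Vd n (fun=> 0) + pi l * Vd n (fun j : nat => (j == k.+1)%:R).
  have V00 : Vd n (fun=> 0) = 0 by rewrite /Vd big1 // => j _; rewrite mulr0.
  by rewrite V00 add0r.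
rewrite -V_lin; apply: V_le => j jm.
have H : forall i, (i <= m)%N -> 0 <= (i == k)%:R :> R by move=> i _; case: (i == k).
rewrite add0r; case: (eqVneq j k.+1) => [e|ne].
  subst j; rewrite mulr1.
  have := Pf_LB (fun i : nat => (i == k)%:R) H k.+1 ltac:(lia) km.
  rewrite (_ : (k.+1 == 2%N) = false) /= ?eqxx ?mulr1 //.
  by apply/negbTE/eqP; lia.
by rewrite mulr0; apply: Pf_ge0.
Qed.

Hypothesis pl0 : 0 < pi l.
Hypothesis ca0 : 0 < ca.

Lemma bound2 N : pi l * ca * \sum_(n < N) state_dist m f pi n 2%N <= state_dist m f pi N 1%N.
Proof.
elim: N => [|N IH]; first by rewrite big_ord0 mulr0 /=.
rewrite big_ord_recr /= mulrDr; apply: le_trans _ (step1 N); exact: lerD.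
Qed.

Lemma bounded j : (2 <= j)%N -> (j < m)%N ->
  exists B, forall N, \sum_(n < N) state_dist m f pi n j <= B.
Proof.
elim: j => [|j IH] // j2 jm.
case: (ltngtP j 2%N) => [|j2'|e].
- move=> jl; have -> : j.+1 = 2%N by lia.
  exists ((pi l * ca)^-1 * 1) => N.
  rewrite ler_pdivlMl ?mulr1; last by apply: mulr_gt0.
  apply: le_trans (bound2 N) _; apply: d_le1; lia.
- have [B HB] := IH ltac:(lia) ltac:(lia).
  exists ((pi l)^-1 * B) => N; rewrite ler_pdivlMl // mulr_sumr.
  apply: le_trans _ (HB N.+1); rewrite big_ord_recl.
  apply: le_trans (_ : \sum_(i < N) state_dist m f pi i.+1 j <= _); last first.
    rewrite lerDr; apply: d_ge0; lia.
  apply: ler_sum => i _; apply: step2; lia.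
- subst j.
  have [B HB] := IH ltac:(lia) ltac:(lia).
  exists ((pi l)^-1 * B) => N; rewrite ler_pdivlMl // mulr_sumr.
  apply: le_trans _ (HB N.+1); rewrite big_ord_recl.
  apply: le_trans (_ : \sum_(i < N) state_dist m f pi i.+1 2%N <= _); last first.
    rewrite lerDr; apply: d_ge0; lia.
  apply: ler_sum => i _; apply: step2; lia.
Qed.

Lemma to0 j : (2 <= j)%N -> (j < m)%N ->
  (fun n => state_dist m f pi n j) @ \oo --> 0.
Proof.
move=> j2 jm; apply: cvg_series_cvg_0; apply: nondecreasing_is_cvgn.
  by apply: nondecreasing_series => n _ _; apply: d_ge0; lia.
have [B HB] := bounded j j2 jm.
by exists B => y [N _ <-]; rewrite /series /= big_mkord; exact: HB.
Qed.

Lemma cvg_sum0 (F : nat -> nat -> R) k :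
  (forall j, (j < k)%N -> F j @ \oo --> 0) ->
  (fun n => \sum_(j < k) F j n) @ \oo --> 0.
Proof.
elim: k => [|k IH] H.
  under eq_fun do rewrite big_ord0; exact: cvg_cst.
have -> : (fun n => \sum_(j < k.+1) F j n) = (fun n => \sum_(j < k) F j n) + F k.
  by apply/funext => n; rewrite big_ord_recr.
rewrite -[X in _ --> X]addr0; apply: cvgD.
  by apply: IH => j jk; apply: H; lia.
exact: H.
Qed.

Lemma absorb_cvg t (psi : nat -> R) : (t <= m)%N -> ((t <= 1)%N || (m <= t)%N) ->
  (forall i, (i <= m)%N -> Pf psi i = psi i) -> psi t = 1 ->
  (forall j, (j <= m)%N -> ((j <= 1)%N || (m <= j)%N) -> j != t -> psi j = 0) ->
  (fun n => state_dist m f pi n t) @ \oo --> psi 2%N.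
Proof.
move=> tm ht Hh Ht H0.
pose psi' := fun j : nat => if (j <= 1)%N || (m <= j)%N then 0 else psi j.
have E : forall n, state_dist m f pi n t =
    psi 2%N - \sum_(j < m.+1) state_dist m f pi n j * psi' j.
  move=> n; rewrite -(harmonic n psi Hh) /Vd.
  have -> : \sum_(j < m.+1) state_dist m f pi n j * psi j =
     \sum_(j < m.+1) ((nat_of_ord j == t)%:R * state_dist m f pi n j +
                      state_dist m f pi n j * psi' j).
    apply: eq_bigr => j _; rewrite /psi'; case: ifP => hj.
      case: (eqVneq (nat_of_ord j) t) => [e|ne].
        by rewrite e Ht mul1r mulr1 mulr0 addr0.
      by rewrite H0 // ?mul0r ?mulr0 ?addr0 // -ltnS.
    have ne : (nat_of_ord j == t) = false.
      apply/negbTE/eqP => e; move: hj ht; rewrite -e => ->; done.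
    by rewrite ne mul0r add0r.
  rewrite big_split /= sum_ind //; ring.
have -> : (fun n => state_dist m f pi n t) =
   (fun n => psi 2%N - \sum_(j < m.+1) state_dist m f pi n j * psi' j).
  by apply/funext => n; rewrite E.
rewrite -[X in _ --> X]subr0; apply: cvgB; first exact: cvg_cst.
apply: (cvg_sum0 (fun j n => state_dist m f pi n j * psi' j)) => j jm.
rewrite /psi'; case: ifP => hj.
  under eq_fun do rewrite mulr0; exact: cvg_cst.
move/negbT: hj; rewrite negb_or -!ltnNge => /andP[j1 jm'].
rewrite -(mul0r (psi j)); apply: cvgMl; exact: to0.
Qed.

Lemma absorb_eq t (psi : nat -> R) : (t <= m)%N -> ((t <= 1)%N || (m <= t)%N) ->
  (forall i, (i <= m)%N -> Pf psi i = psi i) -> psi t = 1 ->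
  (forall j, (j <= m)%N -> ((j <= 1)%N || (m <= j)%N) -> j != t -> psi j = 0) ->
  absorb_prob m f pi t = psi 2%N.
Proof.
move=> *; rewrite /absorb_prob; apply: cvg_lim => //; exact: absorb_cvg.
Qed.

Hypothesis ph0 : 0 < pi h.
Hypothesis cb0 : 0 < cb.

Definition rho := pi l / pi h.
Definition gs (k : nat) := \sum_(i < k) rho ^+ i.+1.
Definition DD := 1 + ca * gs (m - 3) + rho ^+ (m - 2) * ca / cb.
Definition cc := DD^-1.
Definition phi (z : R) (j : nat) : R :=
  match j with
  | 0 => z
  | 1 => 0
  | k.+2 => if (m <= k.+2)%N then 1 else cc * (1 + ca * gs k)
  end.

Lemma rho_ge0 : 0 <= rho.
Proof. by rewrite /rho divr_ge0 // ltW. Qed.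

Lemma gs_ge0 k : 0 <= gs k.
Proof. by apply: sumr_ge0 => i _; apply: exprn_ge0; exact: rho_ge0. Qed.

Lemma DD_gt0 : 0 < DD.
Proof.
have A0 : 0 <= ca * gs (m - 3) by apply: mulr_ge0; [exact: ltW|exact: gs_ge0].
have B0 : 0 <= rho ^+ (m - 2) * ca / cb.
  by apply: divr_ge0; [apply: mulr_ge0; [apply: exprn_ge0; exact: rho_ge0|exact: ltW]|exact: ltW].
rewrite /DD; lra.
Qed.

Lemma gsS k : gs k.+1 = gs k + rho ^+ k.+1.
Proof. by rewrite /gs big_ord_recr. Qed.

Lemma gs0 : gs 0 = 0.
Proof. by rewrite /gs big_ord0. Qed.

Lemma phi_L z k : (k.+3 <= m)%N ->
  (if k.+2 == 2%N then ca * phi z 1 + (1 - ca) * phi z 2 else phi z (k.+2).-1)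
  = phi z k.+2 - cc * ca * rho ^+ k.
Proof.
case: k => [|k] km /=.
  rewrite ifF; last by apply/negbTE; rewrite -ltnNge; lia.
  rewrite gs0; ring.
rewrite ifF; last by apply/negbTE; rewrite -ltnNge; lia.
rewrite ifF; last by apply/negbTE; rewrite -ltnNge; lia.
rewrite gsS; ring.
Qed.

Lemma phi_H z k : (k.+3 <= m)%N ->
  (if k.+2 == m.-1 then cb * phi z m + (1 - cb) * phi z m.-1 else phi z k.+3)
  = phi z k.+2 + cc * ca * rho ^+ k.+1.
Proof.
move=> km; case: (eqVneq k.+3 m) => [e|ne].
  rewrite -e /= eqxx ifT; last by lia.
  rewrite ifF; last by apply/negbTE; rewrite -ltnNge; lia.
  have E3 : (m - 3 = k)%N by lia.
  have E2 : (m - 2 = k.+1)%N by lia.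
  have D0 := DD_gt0.
  rewrite /DD E3 E2 in D0.
  rewrite /cc /DD E3 E2.
  field.
  apply/andP; split; apply: lt0r_neq0 => //.
  have g0 := gs_ge0 k.
  have p1 : 0 < (1 + ca * gs k) * cb.
    by apply: mulr_gt0 => //; have := mulr_ge0 (ltW ca0) g0; lra.
  have p2 : 0 <= rho ^+ k.+1 * ca.
    by apply: mulr_ge0; [apply: exprn_ge0; exact: rho_ge0|exact: ltW].
  lra.
rewrite ifF; last by apply/negbTE/eqP; lia.
rewrite /=.
rewrite ifF; last by apply/negbTE; rewrite -ltnNge; lia.
rewrite ifF; last by apply/negbTE; rewrite -ltnNge; lia.
rewrite gsS; ring.
Qed.

Lemma phi_harm z i : (i <= m)%N -> Pf (phi z) i = phi z i.
Proof.
move=> im; rewrite /Pf; case: ifP => // /negbT.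
rewrite negb_or -!ltnNge; case: i im => [|[|k]] // im /andP[_ km].
rewrite phi_L // phi_H // exprS /rho.
field.
by rewrite lt0r_neq0.
Qed.

Lemma phi_m z : phi z m = 1.
Proof.
have [k e] : exists k, m = k.+2 by exists (m - 2)%N; lia.
by rewrite [in phi z m]e /= ifT //; lia.
Qed.

Lemma phi_2 z : phi z 2 = cc.
Proof. by rewrite /= ifF ?gs0 ?mulr0 ?addr0 ?mulr1 //; apply/negbTE; rewrite -ltnNge. Qed.

Lemma Pf_compl (psi : nat -> R) i : Pf (fun j => 1 - psi j) i = 1 - Pf psi i.
Proof. rewrite /Pf; case: ifP => _ //; case: ifP => _; case: ifP => _; ring. Qed.

Lemma absorb_m : absorb_prob m f pi m = cc.
Proof.
rewrite (absorb_eq m (phi 0)) ?phi_2 ?phi_m ?leqnn ?orbT //.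
  exact: phi_harm.
move=> j jm /orP[j1|mj] jne; last by exfalso; move/negP: jne; apply; rewrite eqn_leq jm mj.
by case: j jm j1 jne => [|[|j]].
Qed.

Lemma absorb_1 : absorb_prob m f pi 1 = 1 - cc.
Proof.
rewrite (absorb_eq 1 (fun j => 1 - phi 1 j)) ?phi_2 //.
- by apply: leq_trans hm.
- by move=> i im; rewrite Pf_compl phi_harm.
- by rewrite /= subr0.
move=> j jm /orP[j1|mj] jne.
  by case: j jm j1 jne => [|[|j]] //= _ _ _; rewrite subrr.
have -> : j = m by apply/eqP; rewrite eqn_leq jm mj.
by rewrite phi_m subrr.
Qed.

End Chain.

Lemma lim_simple (R : realType) (A K : R) : 1 + K != 0 ->
  (fun e => (1 + e * A + K)^-1) @ 0^'+ --> (1 + K)^-1.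
Proof.
move=> hK.
have id0 : (fun e : R => e) @ 0^'+ --> (0 : R).
  by apply: cvg_within_filter; exact: cvg_id.
have H : (fun e : R => 1 + e * A + K) @ 0^'+ --> 1 + 0 * A + K.
  apply: cvgD; last exact: cvg_cst.
  apply: cvgD; first exact: cvg_cst.
  by apply: cvgM => //; exact: cvg_cst.
rewrite mul0r addr0 in H.
exact: cvgV.
Qed.

Lemma sqrtM2 (R : realType) (a b : R) : 0 <= a -> Num.sqrt a * Num.sqrt b = Num.sqrt (a * b).
Proof. by move=> a0; rewrite sqrtrM. Qed.

Theorem mainTheorem13 (R : realType) (S : finType) (piH piL : S -> R)
  (hH : forall s, 0 < piH s) (hL : forall s, 0 < piL s)
  (sH : \sum_(s : S) piH s = 1) (sL : \sum_(s : S) piL s = 1)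
  (hne : piH <> piL)
  (h l : S)
  (hmax : forall s, lr piH piL s <= lr piH piL h)
  (lmin : forall s, lr piH piL l <= lr piH piL s)
  (m : nat) (hm : (3 <= m)%N) (k1 k2 : R) (hk1 : 0 < k1) (hk2 : 0 < k2) :
  let gamma := lr piH piL h / lr piH piL l in
  let G := halfpow m gamma in
  ((fun e => absorb_prob m (proto_f m piH piL h l (k1 * e) (k2 * e)) piH m)
     @ 0^'+ --> (k2 / k1 * G) / (1 + k2 / k1 * G))
  /\
  ((fun e => absorb_prob m (proto_f m piH piL h l (k1 * e) (k2 * e)) piL 1%N)
     @ 0^'+ --> (k1 / k2 * G) / (1 + k1 / k2 * G)).
Proof.
move=> gamma G.
have lrpos : forall s, 0 < lr piH piL s by move=> s; rewrite /lr divr_gt0.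
have hlh : h != l.
  apply/eqP => ehl; apply: hne.
  have c1 : forall s, lr piH piL s = lr piH piL h.
    move=> s; apply/eqP; rewrite eq_le hmax /= ehl; exact: lmin.
  have eH : forall s, piH s = lr piH piL h * piL s.
    move=> s; rewrite -(c1 s) /lr; field; exact: lt0r_neq0.
  have c1' : lr piH piL h = 1.
    have := sH; under eq_bigr do rewrite eH.
    by rewrite -mulr_sumr sL mulr1.
  by apply/funext => s; rewrite eH c1' mul1r.
pose ch := halfpow m (piH h * piL h).
pose cl := halfpow m (piH l * piL l).
have ch0 : 0 < ch by rewrite /ch /halfpow exprn_gt0 // sqrtr_gt0 mulr_gt0.
have cl0 : 0 < cl by rewrite /cl /halfpow exprn_gt0 // sqrtr_gt0 mulr_gt0.
have gam0 : 0 < gamma by rewrite /gamma divr_gt0.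
have G0 : 0 < G by rewrite /G /halfpow exprn_gt0 // sqrtr_gt0.
pose rH := piH l / piH h.
pose rL := piL l / piL h.
have rH0 : 0 < rH by rewrite /rH divr_gt0.
have rL0 : 0 < rL by rewrite /rL divr_gt0.
have nz : forall x : R, 0 < x -> x != 0 by move=> x x0; rewrite lt0r_neq0.
have k1n := nz _ hk1.
have k2n := nz _ hk2.
have Gn := nz _ G0.
have chn := nz _ ch0.
have cln := nz _ cl0.
have rHn : rH ^+ (m - 2) != 0 by apply: nz; apply: exprn_gt0.
have rLn : rL ^+ (m - 2) != 0 by apply: nz; apply: exprn_gt0.
have Gk2 : G * k2 + k1 != 0 by apply: nz; apply: addr_gt0 => //; apply: mulr_gt0.
have Gk1 : k2 + G * k1 != 0 by apply: nz; apply: addr_gt0 => //; apply: mulr_gt0.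
have I1 : cl = G * rH ^+ (m - 2) * ch.
  rewrite /cl /G /ch /halfpow -!exprMn; congr (_ ^+ _).
  rewrite -(ger0_norm (ltW rH0)) -sqrtr_sqr !sqrtM2 ?mulr_ge0 ?sqr_ge0 ?ltW ?invr_gt0 ?hL ?hH ?lrpos //.
  congr (Num.sqrt _); rewrite /gamma /rH /lr.
  by field; rewrite !nz.
have I2 : rL ^+ (m - 2) * ch = G * cl.
  rewrite /cl /G /ch /halfpow -!exprMn; congr (_ ^+ _).
  rewrite -(ger0_norm (ltW rL0)) -sqrtr_sqr !sqrtM2 ?mulr_ge0 ?sqr_ge0 ?ltW ?invr_gt0 ?hL ?hH ?lrpos //.
  congr (Num.sqrt _); rewrite /gamma /rL /lr.
  by field; rewrite !nz.
have rhoH : rho R S h l piH = rH by [].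
have rhoL : rho R S h l piL = rL by [].
have Hsmall : forall e : R, 0 < e -> e < (ch * k1)^-1 -> e < (cl * k2)^-1 ->
   (0 < ch * (k1 * e)) /\ (0 <= ch * (k1 * e) <= 1) /\
   (0 < cl * (k2 * e)) /\ (0 <= cl * (k2 * e) <= 1).
  move=> e e0 ea eb.
  have a0 : 0 < ch * (k1 * e) by rewrite !mulr_gt0.
  have b0 : 0 < cl * (k2 * e) by rewrite !mulr_gt0.
  have a1 : ch * (k1 * e) <= 1.
    by move: ea; rewrite -[X in _ < X]mulr1 ltr_pdivlMl ?mulr_gt0 // mulrA => /ltW.
  have b1 : cl * (k2 * e) <= 1.
    by move: eb; rewrite -[X in _ < X]mulr1 ltr_pdivlMl ?mulr_gt0 // mulrA => /ltW.
  by rewrite a0 b0 (ltW a0) (ltW b0) a1 b1.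

apply: conj.
  pose A := ch * k1 * gs R S h l piH (m - 3).
  pose K := rH ^+ (m - 2) * (ch * k1) / (cl * k2).
  have Hn : \forall e \near 0^'+, (1 + e * A + K)^-1 =
      absorb_prob m (proto_f m piH piL h l (k1 * e) (k2 * e)) piH m.
    near=> e.
    have e0 : 0 < e by near: e; exact: nbhs_right_gt.
    have ea : e < (ch * k1)^-1.
      by near: e; apply: nbhs_right_lt; rewrite invr_gt0 mulr_gt0.
    have eb : e < (cl * k2)^-1.
      by near: e; apply: nbhs_right_lt; rewrite invr_gt0 mulr_gt0.
    have [a0 [a01 [b0 b01]]] := Hsmall e e0 ea eb.
    rewrite (@absorb_m R S piH piL h l (k1 * e) (k2 * e) piH m hm hlh sH
       (fun s => ltW (hH s)) a01 b01 (hH l) a0 (hH h) b0).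
    rewrite /cc /DD /ca /cb rhoH; congr (_^-1); rewrite /A /K.
    rewrite -/ch -/cl; by field; rewrite !nz // ?mulr_gt0.
  apply: cvg_trans (near_eq_cvg Hn) _.
  have -> : k2 / k1 * G / (1 + k2 / k1 * G) = (1 + K)^-1.
    rewrite /K I1; field.
    by rewrite k2n chn rHn Gn Gk2 k1n.
  apply: lim_simple; apply: nz.
  apply: addr_gt0; first exact: ltr01.
  by apply: divr_gt0; apply: mulr_gt0 => //; [exact: exprn_gt0|exact: mulr_gt0].

pose A := ch * k1 * gs R S h l piL (m - 3).
pose K := rL ^+ (m - 2) * (ch * k1) / (cl * k2).
have Hn : \forall e \near 0^'+, 1 - (1 + e * A + K)^-1 =
    absorb_prob m (proto_f m piH piL h l (k1 * e) (k2 * e)) piL 1%N.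
  near=> e.
  have e0 : 0 < e by near: e; exact: nbhs_right_gt.
  have ea : e < (ch * k1)^-1.
    by near: e; apply: nbhs_right_lt; rewrite invr_gt0 mulr_gt0.
  have eb : e < (cl * k2)^-1.
    by near: e; apply: nbhs_right_lt; rewrite invr_gt0 mulr_gt0.
  have [a0 [a01 [b0 b01]]] := Hsmall e e0 ea eb.
  rewrite (@absorb_1 R S piH piL h l (k1 * e) (k2 * e) piL m hm hlh sL
     (fun s => ltW (hL s)) a01 b01 (hL l) a0 (hL h) b0).
  rewrite /cc /DD /ca /cb rhoL; congr (1 - _^-1); rewrite /A /K.
  rewrite -/ch -/cl; by field; rewrite !nz // ?mulr_gt0.
apply: cvg_trans (near_eq_cvg Hn) _.
have -> : k1 / k2 * G / (1 + k1 / k2 * G) = 1 - (1 + K)^-1.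
  rewrite /K mulrA I2; field.
  by rewrite k2n cln Gk1.
apply: cvgB; first exact: cvg_cst.
apply: lim_simple; apply: nz.
apply: addr_gt0; first exact: ltr01.
by apply: divr_gt0; apply: mulr_gt0 => //; [exact: exprn_gt0|exact: mulr_gt0].
Unshelve. all: by end_near.
Qed.
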